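(* For $d\in\mathbb{N}$ and $i\in\{1,\dots,d\}$, $$\mu_i(T_d)\leqslant\frac{i}{2}\Big(1+\frac{d-i}{d+1}\Big).$$
   Context: $T_d=\operatorname{conv}(-\mathbb{1}_d,e_1,\dots,e_d)\subseteq\mathbb{R}^d$ is the standard terminal simplex. For a convex body $K\subseteq\mathbb{R}^d$ and $i\in\{1,\dots,d\}$, $\mu_i(K)=\min\{\mu\ge0:(\mu K+\mathbb{Z}^d)\cap U\ne\emptyset$ for every $(d-i)$-dimensional affine subspace $U\subseteq\mathbb{R}^d\}$. *)

(* Defs.v *)
From HB Require Import structures.
From mathcomp Require Import all_boot all_order all_algebra.
From mathcomp Require Import classical_sets boolp reals.
Set Implicit Arguments. Unset Strict Implicit. Unset Printing Implicit Defensive.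
Import Order.TTheory GRing.Theory Num.Theory.
Local Open Scope ring_scope.
Local Open Scope classical_set_scope.

(* The standard terminal simplex T_d = conv(-1_d, e_1, ..., e_d), written as
   the set of convex combinations of its d+1 vertices. *)
Definition terminal_simplex (R : realType) (d : nat) : set 'rV[R]_d :=
  [set x | exists l : 'I_d.+1 -> R,
     (forall j, 0 <= l j) /\ \sum_(j < d.+1) l j = 1 /\
     x = l ord0 *: (- const_mx 1)
         + \sum_(j < d) l (lift ord0 j) *: delta_mx 0 j].

Definition int_vec (R : realType) (d : nat) (z : 'rV[R]_d) : Prop :=
  forall j, z 0 j \is a Num.int.

Definition affine_subspace_dim (R : realType) (d k : nat) (U : set 'rV[R]_d)
  : Prop :=
  exists (p : 'rV[R]_d) (B : 'M[R]_(k, d)),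
    row_free B /\ U = [set p + w *m B | w in [set: 'rV[R]_k]].

Definition meets_translates (R : realType) (d : nat) (mu : R)
  (K U : set 'rV[R]_d) : Prop :=
  exists x z, K x /\ int_vec z /\ U (mu *: x + z).

(* i-th covering minimum mu_i(K) = min{mu >= 0 : (mu K + Z^d) meets every
   (d-i)-dimensional affine subspace}; rendered as the infimum of that set
   (which is the minimum whenever it is attained). *)
Definition covering_minimum (R : realType) (d : nat) (K : set 'rV[R]_d)
  (i : nat) : R :=
  inf [set mu : R | 0 <= mu /\
        forall U, affine_subspace_dim (d - i) U -> meets_translates mu K U].
Arguments terminal_simplex : clear implicits.

(* Main.v *)
Require Import Defs.
From mathcomp Require Import all_boot all_order all_algebra.
From mathcomp Require Import classical_sets boolp reals.
From mathcomp Require Import ring lra zify.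
Import Order.TTheory GRing.Theory Num.Theory.
Local Open Scope ring_scope.

Definition frac {R : realType} (x : R) : R := x - (Num.floor x)%:~R.

Lemma frac_ge0 {R : realType} (x : R) : 0 <= frac x.
Proof. by rewrite /frac subr_ge0 (Num.Theory.floor_le x). Qed.

Lemma frac_lt1 {R : realType} (x : R) : frac x < 1.
Proof.
have := @Num.Theory.floorD1_gt R x; rewrite intrD /frac; lra.
Qed.

Lemma frac0 {R : realType} : frac (0 : R) = 0.
Proof. by rewrite /frac floor0 subr0. Qed.

Lemma fracN {R : realType} (x : R) : frac x + frac (- x) <= 1.
Proof.
have h1 := @Num.Theory.floorD1_gt R x.
have : (- Num.floor x - 1 <= Num.floor (- x))%R.
  rewrite Num.Theory.floor_ge_int intrB intrN; move: h1; rewrite intrD; lra.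
rewrite -(ler_int R) intrB intrN /frac => h2.
lra.
Qed.
Lemma sum_bool_card (R : realType) (T : finType) (P : pred T) :
  \sum_(l : T) ((P l)%:R : R) = (#|P|)%:R.
Proof.
rewrite -sum1_card natr_sum [RHS]big_mkcond /=; apply: eq_bigr => l _.
by rewrite unfold_in; case: (P l).
Qed.

Lemma comb {R : realType} {d k : nat} (f : 'I_k -> 'I_d) (finj : injective f)
  (Y : 'I_d.+1 -> R) (HY0 : Y ord0 = 0) (HYf : forall a, Y (lift ord0 (f a)) = 0) :
  exists j, \sum_(l < d.+1) frac (Y l - Y j)
     <= ((d.+1)%:R * d%:R - (k.+1)%:R * k%:R) / 2 / (d.+1)%:R.
Proof.
pose G : {set 'I_d.+1} := ord0 |: [set lift ord0 (f a) | a in 'I_k].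
have YG : forall l, l \in G -> Y l = 0.
  move=> l; rewrite !inE => /orP[/eqP->//| /imsetP[a _ ->]]; exact: HYf.
have cardG : #|G| = k.+1.
  rewrite cardsU1 card_imset ?card_ord; last by move=> a b /lift_inj /finj.
  suff -> : ord0 \notin [set lift ord0 (f a) | a in 'I_k] by [].
  apply/imsetP => -[a _ /eqP]; by rewrite (negbTE (neq_lift _ _)).
pose h l j := frac (Y l - Y j).
pose ind (l j : 'I_d.+1) : R := ((l != j) && ~~ ((l \in G) && (j \in G)))%:R.
have hb : forall l j, h l j + h j l <= ind l j.
  move=> l j; rewrite /ind /h; case: eqP => [->|_] /=.
    by rewrite subrr frac0 addr0.
  case: (boolP ((l \in G) && (j \in G))) => [/andP[lG jG]|_] /=.
    by rewrite !YG // subrr frac0 addr0.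
  by have := fracN (Y l - Y j); rewrite opprB.
have sumind : forall j, \sum_l ind l j = d%:R - (j \in G)%:R * k%:R.
  move=> j; rewrite /ind sum_bool_card; case jG: (j \in G) => /=.
    rewrite (eq_card (B := ~: G)); last first.
      move=> l; rewrite finset.in_setC [X in X = _]/in_mem /= andbT; case lG: (l \in G) => /=; first by rewrite andbF.
      by rewrite andbT; apply/eqP => lj; rewrite lj jG in lG.
    have := cardsC G; rewrite cardG card_ord => e.
    have -> : #|~: G| = (d - k)%N by lia.
    rewrite mul1r natrB //; lia.
  rewrite mul0r subr0 (eq_card (B := predC1 j)) ?cardC1 ?card_ord //.
  by move=> l; rewrite [X in X = _]/in_mem /= andbF andbT inE.
have total : \sum_j \sum_l ind l j = (d.+1)%:R * d%:R - (k.+1)%:R * k%:R.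
  rewrite (eq_bigr _ (fun j _ => sumind j)) sumrB sumr_const card_ord -mulr_suml.
  rewrite sum_bool_card (_ : #|in_mem^~ (mem G)| = #|G|); last by apply: eq_card.
  rewrite cardG [in RHS]mulr_natl; reflexivity.
set S := \sum_j \sum_l h l j.
have S2 : S + S <= (d.+1)%:R * d%:R - (k.+1)%:R * k%:R.
  rewrite -total {2}/S exchange_big /= /S -big_split /=.
  apply: ler_sum => j _; rewrite -big_split /=; apply: ler_sum => l _; exact: hb.
apply/not_existsP => hall.
have lt : \sum_(j < d.+1) (((d.+1)%:R * d%:R - (k.+1)%:R * k%:R) / 2 / (d.+1)%:R) < S.
  apply: ltr_sum; first by apply/hasP; exists ord0; rewrite ?mem_index_enum.
  by move=> j _; rewrite ltNge; apply/negP => hj; apply: (hall j).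
move: lt; rewrite sumr_const card_ord.
have dp : (0 : R) < (d.+1)%:R by rewrite ltr0n.
set N := (_ - _) in S2 *.
rewrite -(mulr_natr (N / 2 / _)) divfK; last by rewrite gt_eqF.
move: S2; lra.
Qed.

Lemma meets_lemma (R : realType) (d k : nat) (p : 'rV[R]_d) (B : 'M[R]_(k,d)) (mu : R) :
  row_free B -> 0 < mu ->
  ((d.+1)%:R * d%:R - (k.+1)%:R * k%:R) / 2 / (d.+1)%:R <= mu ->
  meets_translates mu (terminal_simplex R d)
    [set p + w *m B | w in [set: 'rV[R]_k]]%classic.
Proof.
move=> Bfree mu0 hmu.
have Bfull : row_full B^T by rewrite /row_full mxrank_tr.
pose f := fullrankfun Bfull.
have finj : injective f by apply: fullrankfun_inj.
pose C := rowsub f B^T.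
have Cu : C \in unitmx by apply: fullrowsub_unit.
pose w := - (colsub f p) *m invmx C^T.
pose y := p + w *m B.
have yf : forall a, y 0 (f a) = 0.
  move=> a.
  have e : w *m C^T = - colsub f p by rewrite /w -mulmxA mulVmx ?mulmx1 // unitmx_tr.
  have e2 : (w *m C^T) 0 a = (w *m B) 0 (f a).
    by rewrite !mxE; apply: eq_bigr => l _; rewrite !mxE.
  by rewrite /y mxE -e2 e !mxE subrr.
pose Y (l : 'I_d.+1) := if unlift ord0 l is Some j then y 0 j else 0.
have Ylift : forall j, Y (lift ord0 j) = y 0 j by move=> j; rewrite /Y liftK.
have Y0 : Y ord0 = 0 by rewrite /Y unlift_none.
have [j0 hj0] := comb (fun a => f a) finj Y Y0 (fun a => etrans (Ylift (f a)) (yf a)).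
set c := \sum_l frac (Y l - Y j0) in hj0.
have cmu : c <= mu := le_trans hj0 hmu.
have dp : (0 : R) < (d.+1)%:R by rewrite ltr0n.
pose tau := (mu - c) / (d.+1)%:R.
have tau0 : 0 <= tau by apply: divr_ge0; [rewrite subr_ge0 | exact: ltW].
pose lam l := (frac (Y l - Y j0) + tau) / mu.
pose n l := Num.floor (Y l - Y j0).
have ml : forall l, mu * lam l = frac (Y l - Y j0) + tau.
  by move=> l; rewrite /lam mulrC divfK // gt_eqF.
have fr : forall l, Y l - Y j0 = frac (Y l - Y j0) + (n l)%:~R.
  by move=> l; rewrite /frac subrK.
exists (lam ord0 *: (- const_mx 1) + \sum_(j < d) lam (lift ord0 j) *: delta_mx 0 j).
exists (\row_j ((n (lift ord0 j) - n ord0)%:~R)).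
split; [| split].
- exists lam; split; [|split; [|by []]].
  + move=> l; apply: divr_ge0; [apply: addr_ge0; [exact: frac_ge0| exact: tau0] | exact: ltW].
  + rewrite /lam -mulr_suml big_split /= sumr_const card_ord -/c /tau.
    rewrite -(mulr_natr ((mu - c) / _)) divfK ?gt_eqF //.
    by rewrite addrC subrK divff // gt_eqF.
- by move=> j; rewrite mxE; exact: intr_int.
- exists w => //.
  have hx : \sum_(j < d) lam (lift ord0 j) *: delta_mx 0 j = \row_j lam (lift ord0 j).
    by rewrite [RHS]row_sum_delta; apply: eq_bigr => j _; rewrite mxE.
  rewrite -/y hx; apply/rowP => j.
  set X := (lam ord0 *: _ + _).
  have -> : (mu *: X + \row_j0 ((n (lift ord0 j0) - n ord0)%:~R)) 0 j =
     mu * (- lam ord0 + lam (lift ord0 j)) + ((n (lift ord0 j))%:~R - (n ord0)%:~R).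
    by rewrite /X !mxE mulrN1 intrB.
  have h1 := ml (lift ord0 j); have h2 := ml ord0.
  have h3 := fr (lift ord0 j); have h4 := fr ord0.
  rewrite mulrDr mulrN h1 h2.
  rewrite ?Ylift ?Y0 in h1 h2 h3 h4 *.
  lra.
Qed.
Theorem corollary5p9 (R : realType) (d i : nat) :
  (1 <= i <= d)%N ->
  covering_minimum (terminal_simplex R d) i
    <= (i%:R / 2) * (1 + (d - i)%:R / (d + 1)%:R).
Proof.
move=> /andP[i1 id].
set b := (i%:R / 2) * (1 + (d - i)%:R / (d + 1)%:R).
have dp : (0:R) < (d + 1)%:R by rewrite ltr0n addn1.
have ip : (0:R) < i%:R by rewrite ltr0n.
have dip : (0:R) <= (d - i)%:R by rewrite ler0n.
have b0 : 0 < b.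
  rewrite /b; apply: mulr_gt0; first by apply: divr_gt0.
  apply: (lt_le_trans ltr01); rewrite lerDl; exact: divr_ge0 dip (ltW dp).
have hb : ((d.+1)%:R * d%:R - ((d-i).+1)%:R * (d-i)%:R) / 2 / (d.+1)%:R <= b.
  rewrite /b -[d.+1]addn1 -[(d-i).+1]addn1 !natrD natrB //.
  rewrite natrD in dp.
  rewrite le_eqVlt; apply/orP; left; apply/eqP.
  field; rewrite gt_eqF //.
rewrite /covering_minimum; apply: ge_inf.
  by exists 0 => x [].
split; first exact: ltW.
move=> U [p [B [Bfree ->]]].
exact: (@meets_lemma R d (d - i) p B b Bfree b0 hb).
Qed.
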